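(* Let $A^n, A^{n+1}$ be real $N\times N$ matrices satisfying condition (M), let $D=\mathrm{diag}(d_{11},\dots,d_{NN})$ with $d_{ii}>0$ and $\sum_i d_{ii}a^{n+1}_{ij}\ge0$ for every $j$, and let $B^n(\cdot),B^{n+1}(\cdot)$ be limiter-dependent matrices such that $\sum_i d_{ii}b^{n+1}_{ij}(\alpha)=0$ for all $j$ and all $\alpha$. Let $\sigma\in[0,1]$, $\gamma\in(0,1)$, set $s_j=d_{jj}+\Delta t\,\sigma\sum_i d_{ii}a^{n+1}_{ij}$, and let $\Delta t>0$ satisfy $$\Delta t\,\sigma\,\|DB^{n+1}(\mathbf 1)\|_1\le\gamma\min_j s_j .$$ Then for all $\alpha^n,\alpha^{n+1}\in[0,1]^{N-1}$ and all $y^n,g\in\mathbb R^N$ the matrix $E+\Delta t\,\sigma\left(A^{n+1}-B^{n+1}(\alpha^{n+1})\right)$ is invertible, and the solution $y^{n+1}$ of $$\left[E+\Delta t\,\sigma\left(A^{n+1}-B^{n+1}(\alpha^{n+1})\right)\right]y^{n+1}=\left[E-\Delta t(1-\sigma)\left(A^n-B^n(\alpha^n)\right)\right]y^n+\Delta t\,g$$ satisfies $$\|y^{n+1}\|_1\le M\left(M_1\|y^n\|_1+\Delta t\,\|g\|_1\right),\quad M=\frac{\|D\|_1}{(1-\gamma)\min_j s_j},\quad M_1=\|E-\Delta t(1-\sigma)A^n\|_1+\Delta t(1-\sigma)\|B^n(\mathbf 1)\|_1 .$$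
   Context: $E$ is the $N\times N$ identity. Condition (M) on a real $N\times N$ matrix $A=\{a_{ij}\}$: $a_{ii}\ge 0$ for all $i$ and $a_{ij}\le 0$ for all $i\ne j$. Norms: $\|y\|_1=\sum_i|y_i|$, $\|M\|_1=\max_j\sum_i|m_{ij}|$. A limiter-dependent matrix is a map $\alpha=(\alpha_1,\dots,\alpha_{N-1})\in\mathbb R^{N-1}\mapsto B(\alpha)=\{b_{ij}(\alpha)\}$ ($N\times N$) of the form $b_{ij}(\alpha)=\alpha_{\kappa(i,j)}\beta_{ij}$ for $i\ne j$ and $b_{ii}(\alpha)=-\sum_{j\ne i}b_{ij}(\alpha)$, where $\beta_{ij}\le0$ are fixed numbers and $\kappa(i,j)\in\{1,\dots,N-1\}$ are fixed indices. $\mathbf 1$ is the vector with all entries $1$. *)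

(* Defs.v *)
From mathcomp Require Import all_boot all_order all_algebra.
Set Implicit Arguments. Unset Strict Implicit. Unset Printing Implicit Defensive.
Import Order.TTheory GRing.Theory Num.Theory.
Local Open Scope ring_scope.

Section Defs.
Variable R : realFieldType.
Variable N : nat.

Definition condM (A : 'M[R]_N) : Prop :=
  (forall i, 0 <= A i i) /\ (forall i j, i != j -> A i j <= 0).

Definition vnorm1 (y : 'cV[R]_N) : R := \sum_i `|y i 0|.

Definition mnorm1 (M : 'M[R]_N) : R :=
  \big[Order.max/0]_(j < N) \sum_(i < N) `|M i j|.

(* Limiter-dependent matrix B(alpha) built from fixed beta_ij (i<>j) and
   indices kappa(i,j) in {1,...,N-1}; alpha is indexed by nat, only the
   entries 1..N-1 matter. *)
Definition limmx (beta : 'M[R]_N) (kappa : 'I_N -> 'I_N -> nat)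
  (alpha : nat -> R) : 'M[R]_N :=
  \matrix_(i, j) if i == j then - \sum_(k < N | k != i) alpha (kappa i k) * beta i k
                 else alpha (kappa i j) * beta i j.

Definition limiter_data (beta : 'M[R]_N) (kappa : 'I_N -> 'I_N -> nat) : Prop :=
  forall i j, i != j -> beta i j <= 0 /\ (1 <= kappa i j <= N.-1)%N.

Definition in_unit_box (alpha : nat -> R) : Prop :=
  forall k, (1 <= k <= N.-1)%N -> 0 <= alpha k <= 1.

Definition ones_lim : nat -> R := fun _ => 1.

Definition diagD (d : 'I_N -> R) : 'M[R]_N := diag_mx (\row_i d i).
End Defs.

(* Main.v *)
Require Import Defs.
From mathcomp Require Import all_boot all_order all_algebra.
Import Order.TTheory GRing.Theory Num.Theory.
Local Open Scope ring_scope.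
From mathcomp Require Import ring lra.
Set Implicit Arguments. Unset Strict Implicit. Unset Printing Implicit Defensive.


Section Aux.
Variable R : realFieldType.
Variable N : nat.
Implicit Types (M P : 'M[R]_N) (y z : 'cV[R]_N).

Lemma mnorm1_col M j : \sum_i `|M i j| <= mnorm1 M.
Proof. rewrite /mnorm1; exact: (le_bigmax 0 (fun j => \sum_i `|M i j|)). Qed.

Lemma mnorm1_ge0 M : 0 <= mnorm1 M.
Proof. exact: bigmax_ge_id. Qed.

Lemma mnorm1_le M c : 0 <= c -> (forall j, \sum_i `|M i j| <= c) -> mnorm1 M <= c.
Proof. by move=> c0 H; apply: bigmax_le. Qed.

Lemma mnorm1_mono M P : (forall i j, `|M i j| <= `|P i j|) -> mnorm1 M <= mnorm1 P.
Proof.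
move=> H; apply: mnorm1_le; first exact: mnorm1_ge0.
move=> j; apply: le_trans (mnorm1_col P j); exact: ler_sum.
Qed.

Lemma vnorm1_ge0 y : 0 <= vnorm1 y.
Proof. by apply: sumr_ge0 => i _. Qed.

Lemma vnorm1D y z : vnorm1 (y + z) <= vnorm1 y + vnorm1 z.
Proof.
rewrite /vnorm1 -big_split /=; apply: ler_sum => i _; rewrite mxE; exact: ler_normD.
Qed.

Lemma vnorm1Z c y : vnorm1 (c *: y) = `|c| * vnorm1 y.
Proof. rewrite /vnorm1 mulr_sumr; apply: eq_bigr => i _; by rewrite mxE normrM. Qed.

Lemma vnorm1_eq0 y : vnorm1 y <= 0 -> y = 0.
Proof.
move=> H; have H0 : vnorm1 y = 0 by apply/eqP; rewrite eq_le H vnorm1_ge0.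
move/psumr_eq0P: H0 => H1; apply/matrixP => i j; rewrite ord1 mxE.
by apply/eqP; rewrite -normr_eq0 H1.
Qed.

Lemma vnorm1_mul M y : vnorm1 (M *m y) <= mnorm1 M * vnorm1 y.
Proof.
rewrite /vnorm1.
apply: le_trans (_ : \sum_i \sum_j `|M i j| * `|y j 0| <= _).
  apply: ler_sum => i _; rewrite mxE; apply: le_trans (ler_norm_sum _ _ _) _.
  by apply: ler_sum => j _; rewrite normrM.
rewrite exchange_big /= mulr_sumr; apply: ler_sum => j _.
rewrite -mulr_suml; apply: ler_wpM2r => //; exact: mnorm1_col.
Qed.

Lemma vnorm1_lower P z :
  \sum_j `|z j 0| * (`|P j j| - \sum_(i | i != j) `|P i j|) <= vnorm1 (P *m z).
Proof.
rewrite /vnorm1.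
have step : forall i, `|P i i| * `|z i 0| - \sum_(j | j != i) `|P i j| * `|z j 0|
                      <= `|(P *m z) i 0|.
  move=> i; rewrite mxE.
  have E : \sum_j P i j * z j 0 = P i i * z i 0 + \sum_(j | j != i) P i j * z j 0.
    by rewrite (bigD1 i).
  rewrite E lerBlDr -normrM.
  set S := \sum_(j | j != i) P i j * z j 0.
  rewrite {1}(_ : P i i * z i 0 = (P i i * z i 0 + S) - S); last by rewrite addrK.
  apply: le_trans (ler_normB _ _) _; apply: lerD => //.
  apply: le_trans (ler_norm_sum _ _ _) _; apply: ler_sum => j _; by rewrite normrM.
apply: le_trans (_ : \sum_i (`|P i i| * `|z i 0| - \sum_(j | j != i) `|P i j| * `|z j 0|) <= _);
  last by apply: ler_sum => i _; exact: step.
rewrite sumrB; under eq_bigr => j _ do rewrite mulrBr.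
rewrite sumrB.
have E2 : \sum_i `|z i 0| * \sum_(k | k != i) `|P k i| =
          \sum_i \sum_(j | j != i) `|P i j| * `|z j 0|.
  under eq_bigr => i _ do rewrite mulr_sumr big_mkcond.
  under [RHS]eq_bigr => i _ do rewrite big_mkcond.
  rewrite exchange_big; apply: eq_bigr => i _; apply: eq_bigr => j _.
  by rewrite eq_sym; case: ifP => _ //; rewrite mulrC.
rewrite E2; apply: lerD => //.
apply: ler_sum => i _; by rewrite mulrC.
Qed.



Lemma limmx_entry (beta : 'M[R]_N) (kappa : 'I_N -> 'I_N -> nat) (alpha : nat -> R) :
  limiter_data beta kappa -> in_unit_box N alpha ->
  forall i j, `|limmx beta kappa alpha i j| <= `|limmx beta kappa (@ones_lim R) i j|.
Proof.
move=> Hb Ha i j; rewrite !mxE /ones_lim.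
have term : forall k, i != k -> `|alpha (kappa i k) * beta i k| <= `|beta i k|.
  move=> k hk; have [hb hk'] := Hb i k hk.
  have /andP [a0 a1] := Ha _ hk'.
  by rewrite normrM ger0_norm //; apply: ler_piMl.
case: eqP => [e|/eqP hij]; last by rewrite mul1r; apply: term.
subst j.
rewrite !normrN.
apply: le_trans (ler_norm_sum _ _ _) _.
rewrite (ler0_norm); last first.
  apply: sumr_le0 => k hk; rewrite mul1r.
  have hik : i != k by rewrite eq_sym.
  by have [] := Hb i k hik.
rewrite -sumrN; apply: ler_sum => k hk; rewrite mul1r.
apply: le_trans (term k _) _; first by rewrite eq_sym.
have hik : i != k by rewrite eq_sym.
have [hb _] := Hb i k hik.
by rewrite ler0_norm.
Qed.

Lemma Dlimmx_entry (d : 'I_N -> R) (B B' : 'M[R]_N) :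
  (forall i, 0 < d i) -> (forall i j, `|B i j| <= `|B' i j|) ->
  forall i j, `|(diagD d *m B) i j| <= `|(diagD d *m B') i j|.
Proof.
move=> hd H i j; rewrite /diagD !mul_diag_mx !mxE !normrM.
by apply: ler_wpM2l => //.
Qed.

Lemma unitmx_ker (L : 'M[R]_N) : (forall z : 'cV[R]_N, L *m z = 0 -> z = 0) -> L \in unitmx.
Proof.
move=> H; rewrite -unitmx_tr -row_free_unit -kermx_eq0.
apply/eqP/row_matrixP => i; rewrite row0.
set u := row i (kermx L^T).
have hu : u *m L^T = 0 by apply/sub_kermxP; rewrite row_sub.
have : L *m u^T = 0 by apply: trmx_inj; rewrite trmx_mul trmxK hu trmx0.
by move/H => /(congr1 trmx); rewrite trmxK trmx0.
Qed.

End Aux.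

Theorem mainTheorem6 (R : realFieldType) (n : nat)
  (An An1 : 'M[R]_n.+1) (d : 'I_n.+1 -> R)
  (betan betan1 : 'M[R]_n.+1) (kappan kappan1 : 'I_n.+1 -> 'I_n.+1 -> nat)
  (sigma gamma dt : R) :
  condM An -> condM An1 ->
  (forall i, 0 < d i) ->
  (forall j, 0 <= \sum_i d i * An1 i j) ->
  limiter_data betan kappan -> limiter_data betan1 kappan1 ->
  (forall alpha j, \sum_i d i * limmx betan1 kappan1 alpha i j = 0) ->
  0 <= sigma <= 1 -> 0 < gamma < 1 -> 0 < dt ->
  let s := fun j => d j + dt * sigma * \sum_i d i * An1 i j in
  let smin := \big[Order.min/s ord0]_(j < n.+1) s j in
  dt * sigma * mnorm1 (diagD d *m limmx betan1 kappan1 (@ones_lim R)) <= gamma * smin ->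
  let M := mnorm1 (diagD d) / ((1 - gamma) * smin) in
  let M1 := mnorm1 (1%:M - (dt * (1 - sigma)) *: An)
            + dt * (1 - sigma) * mnorm1 (limmx betan kappan (@ones_lim R)) in
  forall (alphan alphan1 : nat -> R) (yn g : 'cV[R]_n.+1),
    in_unit_box n.+1 alphan -> in_unit_box n.+1 alphan1 ->
    let L := 1%:M + (dt * sigma) *: (An1 - limmx betan1 kappan1 alphan1) in
    L \in unitmx /\
    (forall yn1 : 'cV[R]_n.+1,
       L *m yn1 = (1%:M - (dt * (1 - sigma)) *: (An - limmx betan kappan alphan)) *m yn
                  + dt *: g ->
       vnorm1 yn1 <= M * (M1 * vnorm1 yn + dt * vnorm1 g)).
Proof.
move=> hA hA1 hd hdA hbn hbn1 _ /andP[sg0 sg1] /andP[ga0 ga1] dt0 s smin hcfl M M1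
  alphan alphan1 yn g han han1 L.
set c := dt * sigma.
have c0 : 0 <= c by rewrite /c mulr_ge0 // ltW.
have sge : forall j, d j <= s j.
  move=> j; rewrite /s lerDl; apply: mulr_ge0 => //.
have smin_pos : 0 < smin.
  rewrite /smin; elim/big_ind: _.
  - by apply: lt_le_trans (hd ord0) (sge ord0).
  - by move=> x y hx hy; rewrite lt_min hx hy.
  - by move=> j _; apply: lt_le_trans (hd j) (sge j).
have smin_le : forall j, smin <= s j by move=> j; rewrite /smin; apply: bigmin_le.
have lower : forall z, (1 - gamma) * smin * vnorm1 z <= mnorm1 (diagD d) * vnorm1 (L *m z).
  move=> z.
  set P := diagD d *m (1%:M + c *: An1).
  set Q := diagD d *m limmx betan1 kappan1 alphan1.
  have eDL : diagD d *m L = P - c *: Q.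
    by rewrite /L /P /Q mulmxDr [in RHS]mulmxDr -!scalemxAr mulmxBr scalerBr addrA.
  have hcol : forall j, `|P j j| - \sum_(i | i != j) `|P i j| = s j.
    move=> j.
    have Pij : forall i, P i j = d i * ((i == j)%:R + c * An1 i j).
      by move=> i; rewrite /P /diagD mul_diag_mx !mxE.
    have hPjj : 0 <= P j j.
      rewrite Pij eqxx; apply: mulr_ge0; first exact: ltW.
      by apply: addr_ge0; [exact: ler0n | apply: mulr_ge0 => //; exact: hA1.1].
    rewrite (ger0_norm hPjj).
    have -> : \sum_(i | i != j) `|P i j| = - \sum_(i | i != j) P i j.
      rewrite -sumrN; apply: eq_bigr => i hi; apply: ler0_norm.
      rewrite Pij (negbTE hi) add0r; apply: mulr_ge0_le0; first exact: ltW.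
      by apply: mulr_ge0_le0 => //; apply: hA1.2.
    rewrite opprK.
    have -> : P j j + \sum_(i | i != j) P i j = \sum_i P i j by rewrite [RHS](bigD1 j).
    under eq_bigr => i _ do rewrite Pij mulrDr.
    rewrite big_split /= (bigD1 j) //= eqxx mulr1 big1 ?addr0; last first.
      by move=> i hi; rewrite (negbTE hi) mulr0.
    rewrite /s mulr_sumr; congr (_ + _); apply: eq_bigr => i _; rewrite /c; ring.
  have hP : smin * vnorm1 z <= vnorm1 (P *m z).
    apply: le_trans (vnorm1_lower P z).
    rewrite /vnorm1 mulr_sumr; apply: ler_sum => j _; rewrite hcol mulrC.
    by apply: ler_wpM2l => //.
  have hQ : mnorm1 Q <= mnorm1 (diagD d *m limmx betan1 kappan1 (@ones_lim R)).
    exact: (mnorm1_mono (Dlimmx_entry hd (limmx_entry hbn1 han1))).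
  have e2 : P *m z = diagD d *m (L *m z) + c *: (Q *m z).
    by rewrite mulmxA eDL mulmxBl -scalemxAl subrK.
  have h1 := vnorm1D (diagD d *m (L *m z)) (c *: (Q *m z)).
  rewrite -e2 vnorm1Z (ger0_norm c0) in h1.
  have h2 := vnorm1_mul (diagD d) (L *m z).
  have h3 := vnorm1_mul Q z.
  have h4 : c * (mnorm1 Q * vnorm1 z) <= gamma * smin * vnorm1 z.
    rewrite mulrA; apply: ler_wpM2r; first exact: vnorm1_ge0.
    by apply: le_trans hcfl; apply: ler_wpM2l.
  have h5 := ler_wpM2l c0 h3.
  lra.
have k0 : 0 < (1 - gamma) * smin by rewrite mulr_gt0 // subr_gt0.
have v0 : vnorm1 (0 : 'cV[R]_n.+1) = 0.
  by rewrite /vnorm1 big1 // => i _; rewrite mxE normr0.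
split.
  apply: unitmx_ker => z hz; apply: vnorm1_eq0.
  have := lower z; rewrite hz v0 mulr0.
  by rewrite pmulr_rle0.
move=> yn1 hy.
have hl := lower yn1; rewrite hy in hl.
set c' := dt * (1 - sigma).
have c'0 : 0 <= c' by rewrite /c' mulr_ge0 // ?subr_ge0 // ltW.
set T := 1%:M - c' *: An.
set Bn := limmx betan kappan alphan.
have eR : (1%:M - c' *: (An - Bn)) *m yn + dt *: g = T *m yn + c' *: (Bn *m yn) + dt *: g.
  congr (_ + _); rewrite scalerBr opprB [c' *: Bn - _]addrC addrA mulmxDl scalemxAl //.
rewrite eR in hl.
have t1 := vnorm1D (T *m yn + c' *: (Bn *m yn)) (dt *: g).
have t2 := vnorm1D (T *m yn) (c' *: (Bn *m yn)).
rewrite !vnorm1Z (ger0_norm c'0) in t2.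
rewrite !vnorm1Z (ger0_norm (ltW dt0)) in t1.
have t3 := vnorm1_mul T yn.
have t4 := vnorm1_mul Bn yn.
have t5 : mnorm1 Bn <= mnorm1 (limmx betan kappan (@ones_lim R)).
  exact: (mnorm1_mono (limmx_entry hbn han)).
have t6 : c' * vnorm1 (Bn *m yn) <= c' * (mnorm1 (limmx betan kappan (@ones_lim R)) * vnorm1 yn).
  apply: ler_wpM2l => //; apply: le_trans t4 _; apply: ler_wpM2r => //; exact: vnorm1_ge0.
have hX : vnorm1 (T *m yn + c' *: (Bn *m yn) + dt *: g) <= M1 * vnorm1 yn + dt * vnorm1 g.
  rewrite /M1 -/c' -/T; lra.
have mD0 := mnorm1_ge0 (diagD d).
have hl2 := ler_wpM2l mD0 hX.
rewrite /M mulrAC ler_pdivlMr // mulrC; lra.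
Qed.
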